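(* Let $H$ be a finite abelian group with $\operatorname{rank}(H)=s$, and let $(H,\mathcal S,\mathcal W)$ be a tame decomposition configuration. Then there is a positive integer $n$ and a tame decomposition configuration $(G,\mathcal T,\mathcal Z)$ with $G=(\mathbb{Z}/n\mathbb{Z})^s$ that has $(H,\mathcal S,\mathcal W)$ as a quotient. In particular, if $(H,\mathcal S)$ is a tame ramification configuration, then there is a tame ramification configuration $(G,\mathcal T)$ with $G=(\mathbb{Z}/n\mathbb{Z})^s$ for some positive integer $n$ which has $(H,\mathcal S)$ as a quotient.
   Context: For a finite group $G$, $\operatorname{rank}(G)$ is the minimal number of elements of $G$ which together with all their conjugates generate $G$ (for abelian $G$, the minimal number of generators). A (minimal) tame ramification configuration is a pair $(G,\mathcal T)$ with $G$ finite of rank $s$ and $\mathcal T=\{T_1,\dots,T_s\}$ cyclic subgroups of $G$ which together with their conjugates generate $G$. A (minimal) tame decomposition configuration is a triple $(G,\mathcal T,\mathcal Z)$ with $(G,\mathcal T)$ a tame ramification configuration and $\mathcal Z=\{Z_1,\dots,Z_s\}$ subgroups of $G$ with $T_i$ normal in $Z_i$ and $Z_i/T_i$ cyclic. $(H,\mathcal S)$ is a quotient of $(G,\mathcal T)$ if $\operatorname{rank}(H)=\operatorname{rank}(G)$ and there is a surjective homomorphism $\pi:G\to H$ with $\pi(T_i)=S_i$ for all $i$; $(H,\mathcal S,\mathcal W)$ is a quotient of $(G,\mathcal T,\mathcal Z)$ if moreover $\pi(Z_i)=W_i$ for all $i$. *)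

(* Defs.v *)
From mathcomp Require Import all_boot all_algebra all_fingroup all_solvable.
Set Implicit Arguments. Unset Strict Implicit. Unset Printing Implicit Defensive.
Local Open Scope group_scope.

(* rank(G): minimal number of elements of G which, together with all their
   G-conjugates, generate G.  The set G itself is always such a generating
   set, so taking #|G| as the default of the min does not change the value. *)
Definition grank (gT : finGroupType) (G : {group gT}) : nat :=
  \big[minn/#|G|]_(A : {set gT} | (A \subset G) && (<<class_support A G>> == G))
     #|A|.

Definition tame_ram_config (gT : finGroupType) (G : {group gT}) (s : nat)
    (T : 'I_s -> {group gT}) : Prop :=
  [/\ grank G = s,
      forall i, T i \subset G,
      forall i, cyclic (T i)
    & <<class_support (\bigcup_(i < s) T i) G>> = G].

Definition tame_dec_config (gT : finGroupType) (G : {group gT}) (s : nat)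
    (T Z : 'I_s -> {group gT}) : Prop :=
  [/\ tame_ram_config G T,
      forall i, Z i \subset G,
      forall i, T i <| Z i
    & forall i, cyclic (Z i / T i)].

Definition ram_quotient (gT hT : finGroupType) (s : nat)
    (G : {group gT}) (T : 'I_s -> {group gT})
    (H : {group hT}) (S : 'I_s -> {group hT}) : Prop :=
  grank H = grank G /\
  exists f : {morphism G >-> hT},
    f @* G = H /\ (forall i, f @* T i = S i).

Definition dec_quotient (gT hT : finGroupType) (s : nat)
    (G : {group gT}) (T Z : 'I_s -> {group gT})
    (H : {group hT}) (S W : 'I_s -> {group hT}) : Prop :=
  grank H = grank G /\
  exists f : {morphism G >-> hT},
    [/\ f @* G = H, (forall i, f @* T i = S i) & (forall i, f @* Z i = W i)].

(* (Z/nZ)^s, for n > 0, as the additive group of row vectors over 'I_n. *)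
Notation Zn_pow n s := 'rV['I_n.-1.+1]_s.

(* Main.v *)
Require Import Defs.
From mathcomp Require Import all_boot all_algebra all_fingroup all_solvable.
Set Implicit Arguments. Unset Strict Implicit. Unset Printing Implicit Defensive.
Local Open Scope group_scope.

Lemma bigminn_le (I : eqType) (r : seq I) (P : pred I) F x0 i :
  i \in r -> P i -> (\big[minn/x0]_(j <- r | P j) F j <= F i)%N.
Proof.
elim: r => // a r IH; rewrite inE big_cons => /orP [/eqP-> Pi| ir Pi].
  by rewrite Pi geq_minl.
by case: (P a); [rewrite geq_min IH ?orbT | exact: IH].
Qed.

Section Helpers.
Variable gT : finGroupType.
Implicit Types G : {group gT}.

Lemma class_support_ab G (A : {set gT}) :
  abelian G -> A \subset G -> class_support A G = A.
Proof.
move=> abG sAG; apply/eqP; rewrite eqEsubset sub_class_support andbT.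
rewrite class_supportEr; apply/bigcupsP=> x xG.
by rewrite (normsP (sub_abelian_norm abG sAG)).
Qed.

Lemma grank_le G (A : {set gT}) :
  A \subset G -> <<class_support A G>> = G -> (grank G <= #|A|)%N.
Proof.
move=> sAG genA; rewrite /grank; apply: bigminn_le; first exact: mem_index_enum.
by rewrite sAG genA eqxx.
Qed.

Lemma grank_ge G k :
  (forall A : {set gT}, A \subset G -> <<class_support A G>> = G -> k <= #|A|)%N ->
  (k <= #|G|)%N -> (k <= grank G)%N.
Proof.
move=> hA hG; rewrite /grank; elim/big_ind: _ => //.
  by move=> x y; rewrite leq_min => -> ->.
by move=> A /andP[sAG /eqP gA]; apply: hA.
Qed.

Lemma prod_split (I : Type) (r : seq I) (H : {group gT}) (F1 F2 : I -> gT) :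
  abelian H -> (forall i, F1 i \in H) -> (forall i, F2 i \in H) ->
  \prod_(i <- r) (F1 i * F2 i) = (\prod_(i <- r) F1 i) * \prod_(i <- r) F2 i.
Proof.
move=> abH h1 h2; elim: r => [|a r IH]; first by rewrite !big_nil mulg1.
rewrite !big_cons IH.
have c : commute (F2 a) (\prod_(i <- r) F1 i).
  by apply: (centsP abH); [apply: h2 | apply: group_prod => i _; apply: h1].
by rewrite -!mulgA; congr (_ * _); rewrite !mulgA c.
Qed.

End Helpers.

Import FinRing.Theory.

Section Construction.
Variables (hT : finGroupType) (H : {group hT}) (s : nat).
Hypothesis abH : abelian H.
Variable sg : 'I_s -> hT.
Hypothesis sgH : forall i, sg i \in H.

Let m := #|H|.-1.+1.
Let V := Zn_pow #|H| s.

Lemma mE : m = #|H|. Proof. by rewrite /m prednK ?cardG_gt0. Qed.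

Lemma sg_exp_mod i k : sg i ^+ (k %% m) = sg i ^+ k.
Proof. by apply: expg_mod; rewrite mE expg_cardG. Qed.

Definition fv (v : V) : hT := \prod_(i < s) sg i ^+ (v ord0 i).

Lemma fvM : {in [set: V] &, {morph fv : x y / x * y}}.
Proof.
move=> u v _ _; rewrite /fv -(@prod_split _ _ _ H _ _ abH); last 2 first.
- by move=> i; rewrite groupX.
- by move=> i; rewrite groupX.
apply: eq_bigr => i _; rewrite zmodMgE mxE /=.
by rewrite sg_exp_mod expgD.
Qed.

Definition fm : {morphism [set: V] >-> hT} := Morphism fvM.

Definition ev (i : 'I_s) : V := (\row_j (if j == i then inZp 1 else 0))%R.

Lemma fm_ev i : fm (ev i) = sg i.
Proof.
rewrite /= /fv (eq_bigr (fun j => if j == i then sg i else 1)).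
  by rewrite -big_mkcond big_pred1_eq.
move=> j _; rewrite mxE; case: eqP => [->|_] /=.
  by rewrite sg_exp_mod expg1.
by rewrite expg0.
Qed.

Lemma decomp (v : V) : v = (\sum_(i < s) ev i *+ (v ord0 i))%R.
Proof.
apply/rowP => j; rewrite summxE (bigD1 j) //= big1 => [|i ij].
  rewrite GRing.addr0 mulmxnE mxE eqxx Zp_mulrn; apply: val_inj => /=.
  by rewrite modnMml mul1n modn_small.
by rewrite mulmxnE mxE eq_sym (negPf ij) GRing.mul0rn.
Qed.

Lemma mem_decomp (K : {group V}) v : (forall i, ev i \in K) -> v \in K.
Proof.
move=> eK; rewrite (decomp v); elim/big_ind: _ => //.
- exact: (group1 K).
- by move=> x y xK yK; apply: (groupM xK yK).
- by move=> i _; apply: (groupX _ (eK i)).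
Qed.

End Construction.

Lemma main_dec (hT : finGroupType) (H : {group hT}) (s : nat) :
  abelian H -> grank H = s ->
  forall S W : 'I_s -> {group hT},
     tame_dec_config H S W ->
     exists n : nat, (0 < n)%N /\
       exists T Z : 'I_s -> {group Zn_pow n s},
         tame_dec_config [set: Zn_pow n s]%G T Z /\
         dec_quotient [set: Zn_pow n s]%G T Z H S W.
Proof.
move=> abH gr S W [[_ sSH cycS genSH] sWH nSW cycW].
have /fin_all_exists [sg Si] : forall i, exists x : hT, S i :=: <[x]>.
  by move=> i; apply/cyclicP.
have sgH i : sg i \in H by rewrite (subsetP (sSH i)) // Si cycle_id.
have /fin_all_exists [w wP] : forall i, exists x : hT,
    [/\ x \in W i, x \in 'N(S i) & W i / S i = <[coset (S i) x]>].
  move=> i; case/cyclicP: (cycW i) => xb exb.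
  have : xb \in W i / S i by rewrite exb cycle_id.
  by case/morphimP => x xN xW ex; exists x; split; rewrite // exb ex.
pose V := Zn_pow #|H| s.
pose f := fm abH sgH.
pose A0 := [set ev H i | i : 'I_s].
have genA0 : <<A0>> = [set: V].
  apply/eqP; rewrite eqEsubset subsetT /=; apply/subsetP => v _.
  by apply: mem_decomp => i; apply: mem_gen; apply: imset_f.
have sbH : \bigcup_(i < s) S i \subset H by apply/bigcupsP => i _; apply: sSH.
have fG : f @* [set: V] = H.
  have -> : f @* [set: V] = f @* <<A0>> by rewrite genA0.
  rewrite morphim_gen ?subsetT // morphimEsub ?subsetT //.
  rewrite -imset_comp (eq_imset _ (fm_ev abH sgH)).
  apply/eqP; rewrite eqEsubset gen_subG; apply/andP; split.
    by apply/subsetP => x /imsetP [i _ ->].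
  rewrite -{1}genSH (class_support_ab abH sbH) gen_subG.
  apply/bigcupsP => i _; rewrite Si cycle_subG; apply: mem_gen; exact: imset_f.
have /fin_all_exists [v fv] : forall i, exists x : V, f x = w i.
  move=> i.
  have : w i \in f @* [set: V].
    by rewrite fG (subsetP (sWH i)) //; case: (wP i).
  by case/morphimP => x _ _ ->; exists x.
have abV : abelian [set: V] := FinRing.zmod_abelian _.
have key : forall A : {set V}, A \subset [set: V]%G ->
    <<class_support A [set: V]%G>> = [set: V]%G -> (grank H <= #|A|)%N.
  move=> A sA; rewrite (class_support_ab abV sA) => gA.
  apply: (@leq_trans #|f @* A|); last first.
    by rewrite morphimEsub ?subsetT // leq_imset_card.
  have sfA : f @* A \subset H.
    by apply: subset_trans (morphimS f (subsetT A)) _; rewrite fG.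
  apply: grank_le; first exact: sfA.
  by rewrite (class_support_ab abH sfA) -morphim_gen ?subsetT // gA.
have grV : grank [set: V]%G = s.
  apply/eqP; rewrite eqn_leq; apply/andP; split.
    apply: (@leq_trans #|A0|).
      apply: grank_le; first exact: subsetT.
      by rewrite (class_support_ab abV (subsetT _)).
    by apply: (leq_trans (leq_imset_card _ _)); rewrite card_ord.
  rewrite -{1}gr; apply: grank_ge => [A sA gA|]; first exact: (key A sA gA).
  by apply: key => //; rewrite (class_support_ab abV (subxx _)) genGid.
exists #|H|; split; first exact: cardG_gt0.
exists (fun i => <[ev H i]>%G), (fun i => (<[ev H i]> <*> <[v i]>)%G).
have nT : forall i (B : {set V}), B \subset 'N(<[ev H i]>).
  by move=> i B; apply: subset_trans (subsetT B) (sub_abelian_norm abV (subsetT _)).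
split.
  split.
  - split => //.
    + by move=> i; exact: subsetT.
    + by move=> i; exact: cycle_cyclic.
    rewrite (class_support_ab abV (subsetT _)); apply/eqP.
    rewrite eqEsubset subsetT /= -genA0 genS //.
    apply/subsetP => x /imsetP [i _ ->]; apply/bigcupP; exists i => //.
    exact: cycle_id.
  - by move=> i; exact: subsetT.
  - by move=> i; rewrite normalYl nT.
  - move=> i; rewrite quotientYidl ?nT //.
    by apply: quotient_cyclic; apply: cycle_cyclic.
split; first by rewrite grV.
exists f; split=> // i.
  by rewrite /= morphim_cycle ?in_setT // fm_ev Si.
have [wW wN wq] := wP i.
have nSw : <[w i]> \subset 'N(S i) by rewrite cycle_subG.
have WE : W i :=: S i <*> <[w i]>.
  apply: (quotient_inj (nSW i)); first by rewrite normalYl.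
  by rewrite quotientYidl // quotient_cycle.
rewrite /= morphimY ?subsetT // !morphim_cycle ?in_setT // fm_ev.
by rewrite -/f fv WE Si.
Qed.

Unset Implicit Arguments.
Set Strict Implicit.

Theorem proposition3p1 (hT : finGroupType) (H : {group hT}) (s : nat) :
  abelian H -> grank H = s ->
  (forall S W : 'I_s -> {group hT},
     tame_dec_config H S W ->
     exists n : nat, (0 < n)%N /\
       exists T Z : 'I_s -> {group Zn_pow n s},
         tame_dec_config [set: Zn_pow n s]%G T Z /\
         dec_quotient [set: Zn_pow n s]%G T Z H S W) /\
  (forall S : 'I_s -> {group hT},
     tame_ram_config H S ->
     exists n : nat, (0 < n)%N /\
       exists T : 'I_s -> {group Zn_pow n s},
         tame_ram_config [set: Zn_pow n s]%G T /\
         ram_quotient [set: Zn_pow n s]%G T H S).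
Proof.
move=> abH gr; split; first exact: main_dec.
move=> S cfg.
have cfgd : tame_dec_config H S S.
  split.
  - exact: cfg.
  - by move=> i; case: cfg => _ sSH _ _; exact: sSH.
  - by move=> i; exact: normal_refl.
  - by move=> i; rewrite trivg_quotient cyclic1.
have [n [n0 [T [Z [[cT _ _ _] [gq [f [fG fT _]]]]]]]] := main_dec abH gr cfgd.
exists n; split => //; exists T; split => //; split => //.
by exists f; split.
Qed.
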